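(* Up to isomorphism, the only $5$-regular, $1$ net-regular SRSG whose underlying graph is complete (i.e. $K_6$) is $\dot G_2$, the signed $K_6$ whose negative edges form two vertex-disjoint triangles; it has parameters $(6,5,-4,4)$. Moreover, no connected $5$-regular $1$ net-regular SRSG belongs to $\mathcal C_2$.
   Context: A signed graph $\dot G=(G,\sigma)$ is a simple graph $G$ with $\sigma:E(G)\to\{\pm1\}$; adjacency matrix $A_{\dot G}$ has entries $\sigma(v_iv_j)$ for adjacent vertices and $0$ otherwise. Net-degree is $d^+(v)-d^-(v)$; $\rho$ net-regular means all net-degrees equal $\rho$. $\dot G$ on $n$ vertices is an SRSG if it is neither homogeneous (all edges of one sign) complete nor edgeless and there are $r\in\mathbb N$, $a,b,c\in\mathbb Z$ with $(A^2_{\dot G})_{ii}=r$, $(A^2_{\dot G})_{ij}=a$ for positive edges, $b$ for negative edges, $c$ for distinct non-adjacent pairs; parameters $(n,r,a,b)$ when $G$ is complete. $\mathcal C_2$ is the class of inhomogeneous non-complete SRSGs with $a=-b$ and $c=0$. Isomorphism means sign-preserving graph isomorphism. *)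

(* Defs.v *)
(* A signed graph on vertex set 'I_n is represented by its
   signed adjacency matrix A : 'M[int]_n (entries in {-1,0,1}, symmetric,
   zero diagonal); A i j = sigma(ij) if i~j and 0 otherwise. *)
From HB Require Import structures.
From mathcomp Require Import all_boot all_order all_algebra all_fingroup.
Set Implicit Arguments. Unset Strict Implicit. Unset Printing Implicit Defensive.
Import Order.TTheory GRing.Theory Num.Theory.
Local Open Scope ring_scope.

Definition signed_adj n (A : 'M[int]_n) : Prop :=
  (forall i, A i i = 0) /\ (forall i j, A i j = A j i) /\
  (forall i j, A i j = 0 \/ A i j = 1 \/ A i j = -1).

Definition deg n (A : 'M[int]_n) (i : 'I_n) : nat := #|[set j | A i j != 0]|.
Definition pdeg n (A : 'M[int]_n) (i : 'I_n) : nat := #|[set j | A i j == 1]|.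
Definition ndeg n (A : 'M[int]_n) (i : 'I_n) : nat := #|[set j | A i j == -1]|.
Definition net_deg n (A : 'M[int]_n) (i : 'I_n) : int := (pdeg A i)%:Z - (ndeg A i)%:Z.

Definition regular n (A : 'M[int]_n) (k : nat) : Prop := forall i, deg A i = k.
Definition net_regular n (A : 'M[int]_n) (rho : int) : Prop :=
  forall i, net_deg A i = rho.

Definition complete n (A : 'M[int]_n) : Prop := forall i j, i != j -> A i j != 0.
Definition edgeless n (A : 'M[int]_n) : Prop := forall i j, A i j = 0.
Definition homogeneous n (A : 'M[int]_n) : Prop :=
  (forall i j, A i j != -1) \/ (forall i j, A i j != 1).
Definition homogeneous_complete n (A : 'M[int]_n) : Prop :=
  complete A /\ homogeneous A.

Definition connected n (A : 'M[int]_n) : Prop :=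
  forall i j, connect (fun x y => A x y != 0) i j.

Definition SRSG_params n (A : 'M[int]_n) (r : nat) (a b c : int) : Prop :=
  ~ homogeneous_complete A /\ ~ edgeless A /\
  (forall i, (A *m A) i i = r%:Z) /\
  (forall i j, i != j -> A i j = 1 -> (A *m A) i j = a) /\
  (forall i j, i != j -> A i j = -1 -> (A *m A) i j = b) /\
  (forall i j, i != j -> A i j = 0 -> (A *m A) i j = c).

Definition is_SRSG n (A : 'M[int]_n) : Prop :=
  exists (r : nat) (a b c : int), SRSG_params A r a b c.

Definition in_C2 n (A : 'M[int]_n) : Prop :=
  ~ homogeneous A /\ ~ complete A /\
  exists (r : nat) (a b : int), SRSG_params A r a b 0 /\ a = - b.

Definition sg_iso n m (A : 'M[int]_n) (B : 'M[int]_m) : Prop :=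
  exists f : 'I_n -> 'I_m, bijective f /\ forall i j, A i j = B (f i) (f j).

(* signed K_6 whose negative edges form the triangles {0,1,2} and {3,4,5} *)
Definition G2 : 'M[int]_6 :=
  \matrix_(i, j) (if i == j then 0
                  else if ((i < 3)%N == (j < 3)%N) then -1 else 1).

(* Main.v *)
Require Import Defs.
From HB Require Import structures.
From mathcomp Require Import all_boot all_order all_algebra all_fingroup.
From mathcomp Require Import zify.
Import Order.TTheory GRing.Theory Num.Theory.
Set Implicit Arguments. Unset Strict Implicit.
Local Open Scope ring_scope.

Lemma cardZ n (P : pred 'I_n) : \sum_k ((P k)%:R : int) = #|[set k | P k]|%:Z.
Proof.
rewrite -sum1_card -natz natr_sum [RHS]big_mkcond /=; apply: eq_bigr => k _.
by rewrite inE; case: (P k).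
Qed.

Lemma sum_delta n (i : 'I_n) (G : 'I_n -> int) : \sum_k ((k == i)%:R * G k) = G i.
Proof.
rewrite (bigD1 i) //= eqxx mul1r big1 ?addr0 // => k /negbTE ->; by rewrite mul0r.
Qed.

Lemma ent n (A : 'M[int]_n) : signed_adj A -> forall i j, A i j = 0 \/ A i j = 1 \/ A i j = -1.
Proof. by case=> _ []. Qed.

Lemma rowsum n (A : 'M[int]_n) i : signed_adj A -> \sum_j A i j = net_deg A i.
Proof.
move=> SA; rewrite /net_deg /pdeg /ndeg -!cardZ -sumrB; apply: eq_bigr => j _.
by case: (ent SA i j) => [->|[->|->]].
Qed.

Lemma diagsq n (A : 'M[int]_n) i : signed_adj A -> (A *m A) i i = (deg A i)%:Z.
Proof.
move=> SA; rewrite mxE /deg -cardZ; apply: eq_bigr => k _.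
have [_ [sy _]] := SA; rewrite (sy k i).
by case: (ent SA i k) => [->|[->|->]].
Qed.

Lemma rowsumsq n (A : 'M[int]_n) i : signed_adj A -> net_regular A 1 ->
  \sum_j (A *m A) i j = 1.
Proof.
move=> SA NR.
rewrite (eq_bigr (fun j => \sum_k A i k * A k j)); last by move=> j _; rewrite mxE.
rewrite exchange_big /=.
rewrite (eq_bigr (fun k => A i k * 1)); last first.
  by move=> k _; rewrite -mulr_sumr rowsum // NR.
by rewrite (eq_bigr (fun k => A i k)) ?rowsum // => k _; rewrite mulr1.
Qed.

Lemma has_vertex n (A : 'M[int]_n) : ~ edgeless A -> exists i : 'I_n, True.
Proof.
move=> hne; have: [exists i : 'I_n, true].
  apply/existsP; case: (boolP [exists i : 'I_n, true]) => [/existsP //|/existsPn H]; exfalso; apply: hne => i; by have := H i.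
by case/existsP => i _; exists i.
Qed.

Lemma part3 n (A : 'M[int]_n) :
     signed_adj A -> connected A -> regular A 5 -> net_regular A 1 ->
     is_SRSG A -> ~ in_C2 A.
Proof.
move=> SA conn reg NR _ [_ [ncomp [r [a [b [[_ [hne [hd [hp [hn hz]]]]] hab]]]]]].
have [sy0 [sy _]] := SA.
have [i0 _] := has_vertex hne.
have r5 : r%:Z = 5 by rewrite -(hd i0) diagsq // reg.
have form : forall i j, (A *m A) i j = 5 * (i == j)%:R + a * A i j.
  move=> i j; case: (eqVneq i j) => [<-|ij].
    by rewrite hd r5 sy0 mulr0 addr0 mulr1.
  rewrite mulr0 add0r; case: (ent SA i j) => [e|[e|e]].
  - by rewrite hz // e mulr0.
  - by rewrite hp // e mulr1.
  - by rewrite hn // e hab mulrN1 opprK.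
have a4 : a = -4.
  have := rowsumsq i0 SA NR.
  rewrite (eq_bigr _ (fun j _ => form i0 j)) big_split /= -!mulr_sumr rowsum // NR.
  rewrite (eq_bigr (fun j => (j == i0)%:R * 1)); last by move=> j _; rewrite eq_sym mulr1.
  rewrite sum_delta; lia.
have nb : forall i j k, A i j != 0 -> A i k != 0 -> k != j -> A k j != 0.
  move=> i j k hij hik kj.
  set N := [set k | A i k != 0].
  set S := [set k | (A i k != 0) && (A k j != 0)].
  have sub : S \subset N :\ j.
    apply/subsetP => x; rewrite !inE => /andP[h1 h2]; rewrite h1 andbT.
    by apply: contraNneq h2 => ->; rewrite sy0.
  have cN : #|N :\ j| = 4%N.
    have := cardsD1 j N; rewrite /N inE hij.
    by have := reg i; rewrite /deg => -> /= [].
  have le4 : (4 <= #|S|)%N.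
    have : `|(A *m A) i j| <= #|S|%:Z.
      rewrite mxE -cardZ; apply: le_trans (ler_norm_sum _ _ _) _.
      apply: ler_sum => x _; rewrite normrM.
      by case: (ent SA i x) => [->|[->|->]]; case: (ent SA x j) => [->|[->|->]].
    have ij : i != j by apply: contraNneq hij => ->; rewrite sy0.
    rewrite form a4 (negbTE ij) mulr0 add0r normrM.
    case: (ent SA i j) hij => [->|[->|->]] //= _; rewrite ?normrN1 ?normr1 => H; lia.
  have := subset_leqif_cards sub; rewrite cN => -[_].
  have -> : (#|S| == 4)%N by rewrite eqn_leq le4 andbT; have := subset_leq_card sub; rewrite cN.
  move=> /esym /eqP eSN.
  have : k \in N :\ j by rewrite !inE kj hik.
  by rewrite -eSN inE => /andP[].
set M := fun i => [set k | (k == i) || (A i k != 0)].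
have edge : forall x y, A x y != 0 -> M y \subset M x.
  move=> x y hxy; apply/subsetP => k; rewrite !inE => /orP[/eqP->|hyk].
    by rewrite hxy orbT.
  case: (eqVneq k x) => // kx /=.
  rewrite sy; apply: (nb y) => //; by rewrite sy.
apply: ncomp => i j ij.
have : M j \subset M i.
  case/connectP: (conn i j) => p; elim: p i {ij} => [|y p IH] i /=.
    by move=> _ ->.
  move=> /andP[hiy hpth] hl; apply: subset_trans (edge _ _ hiy); exact: IH.
move/subsetP => /(_ j); rewrite !inE eqxx => /(_ isT) /orP[|] //.
by rewrite eq_sym (negbTE ij).
Qed.

Lemma part2a n (A : 'M[int]_n) :
     signed_adj A -> complete A -> regular A 5 -> net_regular A 1 ->
     is_SRSG A ->
     (n = 6)%N /\ exists c : int, SRSG_params A 5 (-4) 4 c /\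
     (forall i j k, i != j -> A i k = -1 -> A k j = -1 -> A i j = -1).
Proof.
move=> SA comp reg NR [r [a [b [c [hhc [hne [hd [hp [hn hz]]]]]]]]].
have [sy0 [sy _]] := SA.
have [i0 _] := has_vertex hne.
have n6 : n = 6%N.
  have := reg i0; rewrite /deg.
  have -> : [set j | A i0 j != 0] = [set~ i0].
    apply/setP => j; rewrite !inE; case: (eqVneq j i0) => [->|ji]; first by rewrite sy0.
    by apply: comp; rewrite eq_sym.
  rewrite cardsC1 card_ord; case: (n) i0 => [[]//|m] _ /= -> //.
have r5 : r%:Z = 5 by rewrite -(hd i0) diagsq // reg.
have pm : forall i j, i != j -> A i j = 1 \/ A i j = -1.
  move=> i j ij; case: (ent SA i j) => [e|] //; by have := comp i j ij; rewrite e.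
have degs : forall i, \sum_k ((A i k == -1)%:R : int) = 2 /\ \sum_k ((A i k == 1)%:R : int) = 3.
  move=> i; rewrite !cardZ.
  have h1 := NR i; rewrite /net_deg /pdeg /ndeg in h1.
  have h2 : (#|[set k | A i k == 1%R]| + #|[set k | A i k == (-1)%R]|)%N = 5%N.
    rewrite -(reg i) /deg -cardsUI.
    have -> : [set k | A i k == 1] :&: [set k | A i k == -1] = set0.
      by apply/setP => k; rewrite !inE; case: (ent SA i k) => [->|[->|->]].
    rewrite cards0 addn0; apply: eq_card => k; rewrite !inE.
    by case: (ent SA i k) => [->|[->|->]].
  lia.
set x := fun i k => ((A i k == -1)%:R : int).
have ex : forall i j, i != j -> (A *m A) i j = -4 + 4 * \sum_k (x i k * x k j) + 4 * x i j.
  move=> i j ij.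
  have pw : forall k, A i k * A k j = 1 + (-2) * x k j + (-1) * ((k == j)%:R * 1) + (-2) * x i k
     + 4 * (x i k * x k j) + 2 * ((k == j)%:R * x i k) + (-1) * ((k == i)%:R * 1)
     + 2 * ((k == i)%:R * x k j) + (k == i)%:R * ((k == j)%:R : int).
    move=> k; rewrite /x.
    case: (eqVneq k i) => [ki|ki]; case: (eqVneq k j) => [kj|kj]; try subst k.
    - by move: ij; rewrite kj eqxx.
    - rewrite sy0; case: (pm i j ij) => ->; rewrite ?eqxx /=; lia.
    - rewrite sy0; case: (pm i j ij) => ->; rewrite ?eqxx /=; lia.
    - have ik : i != k by rewrite eq_sym.
      case: (pm i k ik) => ->; case: (pm k j kj) => ->; rewrite ?eqxx /=; lia.
  rewrite mxE (eq_bigr _ (fun k _ => pw k)) !big_split /= -!mulr_sumr !sum_delta.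
  rewrite sumr_const card_ord (_ : n%:R = 6 :> int); last by rewrite n6.
  have := degs i => -[-> _].
  have -> : \sum_k x k j = 2 by rewrite -(proj1 (degs j)); apply: eq_bigr => k _; rewrite /x sy.
  rewrite (negbTE ij) /=; move: (\sum_(k < n) x i k * x k j) (x i j) => s t; lia.
have cge0 : forall i j, 0 <= \sum_k (x i k * x k j).
  move=> i j; apply: sumr_ge0 => k _; rewrite /x.
  by case: (A i k == -1); case: (A k j == -1).
have cge : forall i j k, A i k = -1 -> A k j = -1 -> 1 <= \sum_k (x i k * x k j).
  move=> i j k e1 e2; rewrite (bigD1 k) //= /x e1 e2 eqxx mulr1 lerDl.
  apply: sumr_ge0 => l _; rewrite /x.
  by case: (A i l == -1); case: (A l j == -1).
have [jp hjp] : exists j, A i0 j = 1.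
  have : (0 < #|[set k | A i0 k == 1%R]|)%N.
    have := proj2 (degs i0); rewrite cardZ; lia.
  by case/card_gt0P => j; rewrite inE => /eqP; exists j.
have [jn hjn] : exists j, A i0 j = -1.
  have : (0 < #|[set k | A i0 k == (-1)%R]|)%N.
    have := proj1 (degs i0); rewrite cardZ; lia.
  by case/card_gt0P => j; rewrite inE => /eqP; exists j.
have nep : i0 != jp by apply: contra_eqN hjp => /eqP <-; rewrite sy0.
have nen : i0 != jn by apply: contra_eqN hjn => /eqP <-; rewrite sy0.
have ea : a = -4 + 4 * \sum_k (x i0 k * x k jp).
  rewrite -(hp _ _ nep hjp) ex // /x hjp /=. by rewrite mulr0 addr0.
have eb : b = 4 * \sum_k (x i0 k * x k jn).
  rewrite -(hn _ _ nen hjn) ex // /x hjn /=; rewrite mulr1; move: (\sum_(k < n) _) => s; lia.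
have rs : 1 = 5 + 3 * a + 2 * b.
  have hs := rowsumsq i0 SA NR.
  rewrite (eq_bigr (fun j => 5 * ((j == i0)%:R * 1) + a * (A i0 j == 1)%:R + b * (A i0 j == -1)%:R)) in hs; last first.
    move=> j _; case: (eqVneq j i0) => [->|ji].
      by rewrite hd r5 sy0 /=; lia.
    have ij : i0 != j by rewrite eq_sym.
    case: (pm i0 j ij) => e; rewrite e /=.
      by rewrite (hp _ _ ij e); lia.
    by rewrite (hn _ _ ij e); lia.
  rewrite !big_split /= -!mulr_sumr sum_delta in hs.
  have [h2 h3] := degs i0; rewrite h2 h3 in hs; lia.
have cp0 := cge0 i0 jp; have cn0 := cge0 i0 jn.
have a4 : a = -4 by lia.
have b4 : b = 4 by lia.
split=> //; exists c; split.
  have -> : 5%N = r by apply/eqP; rewrite -eqz_nat r5.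
  by rewrite -a4 -b4; split.
move=> i j k ij e1 e2.
case: (pm i j ij) => // e.
have := ex i j ij; rewrite (hp _ _ ij e) a4 /x e /=.
have := cge i j k e1 e2; rewrite /x; move: (\sum_(k0 < n) _) => s; lia.
Qed.

Lemma part2b (A : 'M[int]_6) : signed_adj A -> complete A ->
  (forall i, #|[set k | A i k == -1]| = 2%N) ->
  (forall i j k, i != j -> A i k = -1 -> A k j = -1 -> A i j = -1) ->
  sg_iso A G2.
Proof.
move=> SA comp nd tr.
have [sy0 [sy _]] := SA.
have pm : forall i j, i != j -> A i j = 1 \/ A i j = -1.
  move=> i j ij; case: (ent SA i j) => [e|] //; by have := comp i j ij; rewrite e.
set R := fun i j => (i == j) || (A i j == -1).
have Rs : forall i j, R i j -> R j i by move=> i j; rewrite /R eq_sym sy.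
have Rt : forall i j k, R i k -> R k j -> R i j.
  move=> i j k; rewrite /R => /orP[/eqP->|e1] // /orP[/eqP<-|e2]; first by rewrite e1 orbT.
  case: (eqVneq i j) => //= ij; apply/eqP; apply: (tr i j k ij); exact/eqP.
set x0 : 'I_6 := ord0.
set C := x0 |: [set j | A x0 j == -1].
have cC : #|C| = 3%N by rewrite cardsU1 nd inE sy0.
have inC : forall i, (i \in C) = R x0 i by move=> i; rewrite !inE /R eq_sym.
have key : forall i j, i != j -> (A i j == -1) = ((i \in C) == (j \in C)).
  move=> i j ij.
  case iC: (i \in C); case jC: (j \in C) => /=.
  - apply/eqP; have := Rt i j x0 (Rs _ _ (etrans (esym (inC i)) iC)) (etrans (esym (inC j)) jC).
    by rewrite /R (negbTE ij) => /eqP.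
  - apply/negP => e; have : R x0 j.
      apply: (Rt _ _ i); first by rewrite -inC iC.
      by rewrite /R e orbT.
    by rewrite -inC jC.
  - apply/negP => e; have : R x0 i.
      apply: (Rt _ _ j); first by rewrite -inC jC.
      by rewrite /R sy e orbT.
    by rewrite -inC iC.
  - set N := [set k | A i k == -1].
    have sub : N \subset ~: C :\ i.
      apply/subsetP => k; rewrite inE => e; rewrite in_setD1 in_setC.
      have ki : k != i by apply: contraTneq e => ->; rewrite sy0.
      rewrite ki /=; apply/negP => kC.
      have : R x0 i.
        apply: (Rt _ _ k); first by rewrite -inC.
        by rewrite /R sy e orbT.
      by rewrite -inC iC.
    have cc : #|~: C :\ i| = 2%N.
      have c3 : #|~: C| = 3%N by have := cardsC C; rewrite cC card_ord; lia.
      by move: c3; rewrite (cardsD1 i (~: C)) in_setC iC /= => -[].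
    have := subset_leqif_cards sub; rewrite cc nd => -[_ /esym/eqP eN].
    have : j \in ~: C :\ i by rewrite in_setD1 in_setC jC eq_sym ij.
    by rewrite -eN inE.
pose f := fun i : 'I_6 => if i \in C then (inord (index i (enum C)) : 'I_6)
                          else inord (3 + index i (enum (~: C))).
have ltC : forall i, i \in C -> (index i (enum C) < 3)%N.
  by move=> i iC; have := index_mem i (enum C); rewrite mem_enum iC -cardE cC => ->.
have ltnC : forall i, i \notin C -> (index i (enum (~: C)) < 3)%N.
  move=> i iC; have c3 : #|~: C| = 3%N by have := cardsC C; rewrite cC card_ord; lia.
  by have := index_mem i (enum (~: C)); rewrite mem_enum in_setC iC -cardE c3 => ->.
have fv : forall i, nat_of_ord (f i) = if i \in C then index i (enum C) else (3 + index i (enum (~: C)))%N.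
  move=> i; rewrite /f; case: ifP => iC; rewrite inordK //.
    exact: leq_trans (ltC i iC) _.
  by rewrite -[6%N]/(3 + 3)%N ltn_add2l ltnC // negbT.
have f3 : forall i, (nat_of_ord (f i) < 3)%N = (i \in C).
  move=> i; rewrite fv; case: ifP => iC; first by rewrite ltC.
  lia.
have finj : injective f.
  move=> i j /(congr1 (@nat_of_ord 6)); rewrite !fv.
  case iC: (i \in C); case jC: (j \in C).
  - by move=> h; apply: (@index_inj _ i (enum C) i j) => //; rewrite mem_enum.
  - move=> h; have := ltC i iC; rewrite h; move: (index j _) => m; lia.
  - move=> h; have := ltC j jC; rewrite -h; move: (index i _) => m; lia.
  - move=> /eqP; rewrite eqn_add2l => /eqP h.
    by apply: (@index_inj _ i (enum (~: C)) i j) => //; rewrite mem_enum in_setC ?iC ?jC.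
exists f; split; first by apply: inj_card_bij.
move=> i j; rewrite mxE (inj_eq finj) f3 f3.
case: (eqVneq i j) => [->|ij]; first by rewrite sy0.
have := key i j ij; case: (pm i j ij) => -> /=.
  by move/esym => ->.
by move/esym => ->.
Qed.

Lemma ndeg2 n (A : 'M[int]_n) i : signed_adj A -> regular A 5 -> net_regular A 1 ->
  #|[set k | A i k == -1]| = 2%N.
Proof.
move=> SA reg NR.
have h1 := NR i; rewrite /net_deg /pdeg /ndeg in h1.
have h2 : (#|[set k | A i k == 1%R]| + #|[set k | A i k == (-1)%R]|)%N = 5%N.
  rewrite -(reg i) /deg -cardsUI.
  have -> : [set k | A i k == 1] :&: [set k | A i k == -1] = set0.
    by apply/setP => k; rewrite !inE; case: (ent SA i k) => [->|[->|->]].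
  rewrite cards0 addn0; apply: eq_card => k; rewrite !inE.
  by case: (ent SA i k) => [->|[->|->]].
lia.
Qed.

Lemma g2sq (i j : 'I_6) : (G2 *m G2) i j = if i == j then 5 else if ((i<3)%N == (j < 3)%N) then 4 else -4.
Proof. rewrite !mxE !big_ord_recl big_ord0 !mxE.
case: i => [[|[|[|[|[|[|//]]]]]] ?]; case: j => [[|[|[|[|[|[|//]]]]]] ?]; by []. Qed.

Lemma g2p (i : 'I_6) : (pdeg G2 i = 3 /\ ndeg G2 i = 2 /\ deg G2 i = 5)%N.
Proof. rewrite /pdeg /ndeg /deg.
split; [|split]; rewrite -sum1_card big_mkcond !big_ord_recl big_ord0 !inE !mxE /=;
by case: i => [[|[|[|[|[|[|//]]]]]] ?]. Qed.

Lemma part1 : signed_adj G2 /\ complete G2 /\ regular G2 5 /\ net_regular G2 1 /\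
   SRSG_params G2 5 (-4) 4 0.
Proof.
have sa : signed_adj G2.
  split; first by move=> i; rewrite mxE eqxx.
  split; first by move=> i j; rewrite !mxE eq_sym [((j < 3)%N == _)]eq_sym.
  move=> i j; rewrite mxE; case: (_ == _); first by left.
  by case: (_ == _); right; [right|left].
have cp : complete G2 by move=> i j ij; rewrite mxE (negbTE ij); case: ifP.
split=> //; split=> //; split; first by move=> i; case: (g2p i) => _ [].
split; first by move=> i; rewrite /net_deg; case: (g2p i) => -> [-> _].
split.
  case=> _ [H|H].
    by have := H (@Ordinal 6 0 isT) (@Ordinal 6 1 isT); rewrite mxE.
  by have := H (@Ordinal 6 0 isT) (@Ordinal 6 3 isT); rewrite mxE.
split; first by move=> H; have := H (@Ordinal 6 0 isT) (@Ordinal 6 1 isT); rewrite mxE.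
split; first by move=> i; rewrite g2sq eqxx.
split.
  move=> i j ij; rewrite g2sq mxE (negbTE ij).
  by case: (_ == _).
split.
  move=> i j ij; rewrite g2sq mxE (negbTE ij).
  by case: (_ == _).
by move=> i j ij; rewrite mxE (negbTE ij); case: ifP.
Qed.

Theorem mainTheorem14 :
  (signed_adj G2 /\ complete G2 /\ regular G2 5 /\ net_regular G2 1 /\
   SRSG_params G2 5 (-4) 4 0) /\
  (forall (n : nat) (A : 'M[int]_n),
     signed_adj A -> complete A -> regular A 5 -> net_regular A 1 ->
     is_SRSG A ->
     sg_iso A G2 /\ exists c : int, SRSG_params A 5 (-4) 4 c) /\
  (forall (n : nat) (A : 'M[int]_n),
     signed_adj A -> connected A -> regular A 5 -> net_regular A 1 ->
     is_SRSG A -> ~ in_C2 A).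
Proof.
split; first exact: part1.
split; last exact: part3.
move=> n A SA cp reg NR srsg.
have [n6 [c [hc tr]]] := part2a SA cp reg NR srsg.
split; last by exists c.
subst n.
apply: part2b => // i; exact: ndeg2.
Qed.
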